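(* Let $n\ge 2$ and $1\le \ell\le n-1$. Let $\mathbf{x}=(x_1,\dots,x_n)$ satisfy $x_1\le\dots\le x_\ell<0\le x_{\ell+1}\le\dots\le x_n$, and let $M=-\mathbf{x}^T\mathbf{x}$, with pairwise distinct off-diagonal entries. Then $\beta_k(t)=0$ for all $k>0$ and all $t\in[0,1]$.
   Context: Betti curves of a symmetric matrix. Let $M$ be a real symmetric $n\times n$ matrix whose $\binom{n}{2}$ off-diagonal entries $M_{ij}$ ($i<j$) are pairwise distinct. The ordering matrix $\widehat{M}$ is defined by $\widehat{M}_{ij}=k$ if $M_{ij}$ is the $k$-th smallest off-diagonal entry. For $t\in[0,1]$, $G_t=G_t(M)$ is the graph on vertex set $\{1,\dots,n\}$ with edge set $\{\{i,j\} : \widehat{M}_{ij}\le t\binom{n}{2}\}$ (so edges are added in increasing order of the entries $M_{ij}$; $G_0$ has no edges and $G_1$ is complete). $X(G_t)$ is the clique complex of $G_t$ (every $k$-clique of $G_t$ is filled in by a $(k-1)$-dimensional simplex). The $i$-th Betti curve of $M$ is $\beta_i(t)=\operatorname{rank} H_i(X(G_t);\mathbf{k})$, with $H_i$ simplicial homology with coefficients in a fixed field $\mathbf{k}$. Here $\mathbf{x}$ is a row vector, so $\mathbf{x}^T\mathbf{x}$ is the $n\times n$ matrix with entries $x_ix_j$. *)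

(* Defs.v *)
From HB Require Import structures.
From mathcomp Require Import all_boot all_order all_algebra.
Set Implicit Arguments. Unset Strict Implicit. Unset Printing Implicit Defensive.
Import Order.TTheory GRing.Theory Num.Theory.
Local Open Scope ring_scope.

Section BettiCurves.
Variables (R : realFieldType) (n : nat).

Definition offdiag_distinct (M : 'M[R]_n) : Prop :=
  forall i j k l : 'I_n, (i < j)%N -> (k < l)%N -> M i j = M k l -> i = k /\ j = l.

(* ordering matrix: hatM_ij = k iff M_ij is the k-th smallest off-diagonal entry *)
Definition ordmx (M : 'M[R]_n) (i j : 'I_n) : nat :=
  (#|[set p : 'I_n * 'I_n | (p.1 < p.2)%N & M p.1 p.2 < M i j]|).+1.

Definition Gedge (M : 'M[R]_n) (t : R) (i j : 'I_n) : bool :=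
  (i != j) && ((ordmx M i j)%:R <= t * ('C(n, 2))%:R).

Definition simplices (M : 'M[R]_n) (t : R) (k : nat) : {set {set 'I_n}} :=
  [set s : {set 'I_n} | (#|s| == k.+1) &&
     [forall u in s, forall v in s, (u != v) ==> Gedge M t u v]].

End BettiCurves.

Section Homology.
Variables (F : fieldType) (R : realFieldType) (n : nat) (M : 'M[R]_n) (t : R).

Local Notation S k := (simplices M t k).

(* boundary d_{k+1} : C_{k+1} -> C_k (chains as row vectors, v |-> v *m bnd k);
   the face of tau = [v_0 < ... < v_{k+1}] omitting v_i gets sign (-1)^i *)
Definition bnd (k : nat) : 'M[F]_(#|S k.+1|, #|S k|) :=
  \matrix_(a < #|S k.+1|, b < #|S k|)
    (let tau : {set 'I_n} := @enum_val _ (mem (S k.+1)) a in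
     let sg : {set 'I_n} := @enum_val _ (mem (S k)) b in
     \sum_(v in tau | sg == tau :\ v) (-1) ^+ #|[set u in tau | (u < v)%N]|).

Definition betti (k : nat) : nat :=
  match k with
  | 0 => (#|S 0| - \rank (bnd 0))%N
  | k'.+1 => (\rank (kermx (bnd k')) - \rank (bnd k'.+1))%N
  end.

End Homology.

(* Main.v *)
Require Import Defs.
From HB Require Import structures.
From mathcomp Require Import all_boot all_order all_algebra.
From mathcomp Require Import ring lra zify.
Set Implicit Arguments. Unset Strict Implicit. Unset Printing Implicit Defensive.
Import Order.TTheory GRing.Theory Num.Theory.
Local Open Scope ring_scope.

Section Chains.
Variables (F : fieldType) (n : nat).
Implicit Types (s r : {set 'I_n}) (c : {set 'I_n} -> F).

Definition sgn s (v : 'I_n) : F := (-1) ^+ #|[set u in s | (u < v)%N]|.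

Definition bdc c s : F := \sum_(v | v \notin s) c (v |: s) * sgn (v |: s) v.

Definition cone (w : 'I_n) c s : F := if w \in s then sgn s w * c (s :\ w) else 0.

Lemma sgn_U1 s v w : v \notin s -> sgn (v |: s) w = (-1) ^+ (v < w)%N * sgn s w.
Proof.
move=> vs; rewrite /sgn -exprD; congr (_ ^+ _).
case: (ltnP v w) => hv /=.
  have -> : [set u in v |: s | (u < w)%N] = v |: [set u in s | (u < w)%N].
    by apply/setP => u; rewrite !inE; case: eqP => // ->; rewrite hv.
  by rewrite cardsU1 inE (negbTE vs).
have -> // : [set u in v |: s | (u < w)%N] = [set u in s | (u < w)%N].
apply/setP => u; rewrite !inE; case: eqP => // -> /=.
by rewrite (negbTE vs) ltnNge hv.
Qed.

Lemma sgn_U1v s v : v \notin s -> sgn (v |: s) v = sgn s v.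
Proof. by move=> vs; rewrite sgn_U1 // ltnn mul1r. Qed.

Lemma sign2 (m : nat) : (-1) ^+ m * (-1) ^+ m = 1 :> F.
Proof. by rewrite -exprD addnn -mul2n exprM sqrrN expr1n expr1n. Qed.

Lemma sgn2 s v : sgn s v * sgn s v = 1.
Proof. exact: sign2. Qed.

Lemma sgn_D1 s v w : w \in s -> sgn (s :\ w) v = (-1) ^+ (w < v)%N * sgn s v.
Proof.
move=> ws; have h : w \notin s :\ w by rewrite setD11.
by rewrite -[in RHS](setD1K ws) sgn_U1 // mulrA sign2 mul1r.
Qed.

Lemma sign_swap (v w : 'I_n) : v != w ->
  (-1) ^+ (v < w)%N = - (-1) ^+ (w < v)%N :> F.
Proof.
move=> vw; case: (ltngtP v w) => h /=; rewrite ?expr0 ?expr1 ?opprK //.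
by move: vw; rewrite (val_inj h) eqxx.
Qed.

Lemma cone_id w c s : bdc (cone w c) s + cone w (bdc c) s = c s.
Proof.
rewrite /cone /bdc; case: ifP => ws.
  have wD : w \notin s :\ w by rewrite setD11.
  rewrite [X in _ + _ * X](bigD1 w) //=.
  rewrite setD1K // mulrDr [sgn s w * (c s * _)]mulrCA sgn2 mulr1 addrCA.
  rewrite -[RHS]addr0; congr (_ + _).
  rewrite mulr_sumr.
  rewrite [X in _ + X](eq_bigl (fun v => v \notin s)); last first.
    move=> v; rewrite !inE; case: (v =P w) => [->|/eqP vw]; rewrite ?eqxx ?ws ?vw //=; by rewrite andbT.
  rewrite -big_split /=; apply: big1 => v vs.
  have vw : v != w by apply: contraNneq vs => ->.
  have -> : (v |: s) :\ w = v |: (s :\ w).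
    by apply/setP => u; rewrite !inE; case: (u =P v) => // ->; rewrite vw.
  rewrite (ifT _ _ (_ : w \in v |: s)); last by rewrite !inE ws orbT.
  have vD : v \notin s :\ w by rewrite !inE negb_and vs orbT.
  rewrite sgn_U1 // sgn_U1v // sgn_U1v // sgn_D1 // sign_swap //.
  ring.
rewrite addr0 (bigD1 w) ?ws //= setU11 /= setU1K ?ws // mulrAC sgn2 mul1r.
rewrite -[RHS]addr0; congr (_ + _); apply: big1 => v /andP [vs vw].
by rewrite !inE ws orbF eq_sym (negbTE vw) mul0r.
Qed.

Lemma antisym_sum (g : 'I_n -> 'I_n -> F) :
  (forall u v, g u v = - g v u) -> (forall v, g v v = 0) -> \sum_v \sum_u g v u = 0.
Proof.
move=> ga gd.
have -> : \sum_v \sum_u g v u =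
   \sum_(v : 'I_n) \sum_(u : 'I_n) (if (u < v)%N then g v u else 0) +
   \sum_(v : 'I_n) \sum_(u : 'I_n) (if (v < u)%N then g v u else 0).
  rewrite -big_split /=; apply: eq_bigr => v _; rewrite -big_split /=.
  apply: eq_bigr => u _; case: (ltngtP u v) => h; rewrite ?addr0 ?add0r //.
  by rewrite (val_inj h) gd.
rewrite [X in _ + X]exchange_big /=; rewrite -big_split /=; apply: big1 => v _.
rewrite -big_split /=; apply: big1 => u _.
by case: ifP => _; rewrite ?addr0 // [g u v]ga subrr.
Qed.

Lemma bdc_bdc c s : bdc (bdc c) s = 0.
Proof.
rewrite /bdc.
pose g v u := if (v \notin s) && (u \notin s) && (u != v) then
   c (u |: (v |: s)) * sgn (u |: (v |: s)) u * sgn (v |: s) v else 0.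
transitivity (\sum_v \sum_u g v u).
  rewrite big_mkcond /=; apply: eq_bigr => v _.
  case: ifP => vs /=; last by rewrite big1 // => u _; rewrite /g vs.
  rewrite mulr_suml big_mkcond /=; apply: eq_bigr => u _.
  rewrite /g vs /= !inE negb_or; case: (u =P v) => [->|/eqP uv] /=.
    by rewrite andbF.
  by rewrite andbT.
apply: antisym_sum => [v u|v]; rewrite /g; last by rewrite eqxx andbF.
case: (u =P v) => [->|/eqP uv]; first by rewrite eqxx /= ?andbF oppr0.
rewrite eq_sym uv /= andbT [(u \notin s) && _]andbC; case: ifP => [/andP [vs us]|_]; last by rewrite oppr0.
have uv' : u \notin v |: s by rewrite !inE negb_or uv us.
have vu' : v \notin u |: s by rewrite !inE negb_or eq_sym uv vs.
rewrite /= (sgn_U1v uv') (sgn_U1v vu') (sgn_U1v vs) (sgn_U1v us) (sgn_U1 u vs) (sgn_U1 v us) (sign_swap uv).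
rewrite [in c (v |: _)]setUCA; ring.
Qed.

Lemma bdcD c1 c2 s : bdc (fun r => c1 r + c2 r) s = bdc c1 s + bdc c2 s.
Proof. by rewrite /bdc -big_split; apply: eq_bigr => v _; rewrite mulrDl. Qed.

Lemma bdcB c1 c2 s : bdc (fun r => c1 r - c2 r) s = bdc c1 s - bdc c2 s.
Proof. by rewrite /bdc -sumrB; apply: eq_bigr => v _; rewrite mulrBl. Qed.

Lemma bdc0 s : bdc (fun _ => 0) s = 0.
Proof. by rewrite /bdc big1 // => v _; rewrite mul0r. Qed.

Lemma bdc_nz c s : bdc c s != 0 -> exists2 u, u \notin s & c (u |: s) != 0.
Proof.
move=> h; case: (pickP (fun u => (u \notin s) && (c (u |: s) != 0))) => [u /andP [us cu]|hn].
  by exists u.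
move: h; rewrite /bdc big1 ?eqxx //.
move=> u us; move: (hn u); rewrite us /= => /negbFE /eqP ->; by rewrite mul0r.
Qed.

Section Graph.
Variable E : rel 'I_n.
Hypothesis Esym : symmetric E.

Definition clq s := [forall u in s, forall v in s, (u != v) ==> E u v].
Definition cl (U : {set 'I_n}) m s := [&& s \subset U, #|s| == m & clq s].
Definition supp c (P : pred {set 'I_n}) := forall s, c s != 0 -> P s.

Lemma clqP s : reflect (forall u v, u \in s -> v \in s -> u != v -> E u v) (clq s).
Proof.
apply: (iffP forallP) => [h u v us vs uv|h u].
  by move: (h u); rewrite us /= => /forallP /(_ v); rewrite vs uv.
by apply/implyP => us; apply/forallP => v; apply/implyP => vs; apply/implyP; apply: h.
Qed.

Lemma clq_sub s r : r \subset s -> clq s -> clq r.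
Proof.
move=> rs /clqP h; apply/clqP => u v ur vr; apply: h; exact: (subsetP rs).
Qed.

Lemma reduce (U : {set 'I_n}) (v w : 'I_n) m c :
  (1 < m)%N -> v \in U -> w \in U -> w != v ->
  (forall u, u \in U -> u != v -> E u v -> E v w && ((u == w) || E u w)) ->
  supp c (cl U m) -> (forall s, bdc c s = 0) ->
  exists e, supp e (cl U m.+1) /\ supp (fun s => c s - bdc e s) (cl (U :\ v) m).
Proof.
move=> hm vU wU wv dom cs cz.
pose cv s := if v \in s then c s else 0.
have se : supp (cone w cv) (cl U m.+1).
  move=> r; rewrite /cone; case: ifP => [wr|]; last by rewrite eqxx.
  rewrite mulf_eq0 negb_or => /andP [_]; rewrite /cv; case: ifP => [vr|]; last by rewrite eqxx.
  move=> /cs /and3P [sU /eqP sm sc].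
  have wD : w \notin r :\ w by rewrite setD11.
  rewrite -(setD1K wr); apply/and3P; split.
  - by rewrite subUset sub1set wU sU.
  - by rewrite cardsU1 wD sm.
  have [u [uS uv]] : exists u, u \in r :\ w /\ u != v.
    have : (1 < #|r :\ w|)%N by rewrite sm.
    case/card_gt1P => a [b [aS bS ab]].
    case: (a =P v) => [av|/eqP av]; last by exists a.
    by exists b; split => //; rewrite -av eq_sym.
  have Euv : E u v by move/clqP: sc; apply.
  have Evw : E v w by case/andP: (dom u (subsetP sU u uS) uv Euv).
  have Ew b : b \in r :\ w -> E b w.
    move=> bS; case: (b =P v) => [->//|/eqP bv].
    have Ebv : E b v by move/clqP: sc; apply.
    case/andP: (dom b (subsetP sU b bS) bv Ebv) => _ /orP [/eqP bw|//].
    by move: bS; rewrite bw setD11.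
  apply/clqP => a b; rewrite !in_setU1 => /orP [/eqP ->|aS] /orP [/eqP ->|bS];
    rewrite ?eqxx // => ab.
  - by rewrite Esym; apply: Ew.
  - by apply: Ew.
  - by move/clqP: sc; apply.
exists (cone w cv); split => //.
have cvE r : v \in r -> bdc cv r = bdc c r.
  move=> vr; apply: eq_bigr => u _; rewrite /cv !inE vr orbT //.
move=> s h.
have vs : v \notin s.
  apply/negP => vs; move/eqP: h; apply.
  have := cone_id w cv s; move=> /(canRL (addrK _)) ->.
  have -> : cv s = c s by rewrite /cv vs.
  rewrite opprB addrC subrK /cone; case: ifP => ws //.
  by rewrite cvE ?cz ?mulr0 // !inE vs andbT eq_sym.
have sub r : r \subset U -> r \subset U :\ v = (v \notin r).
  move=> rU; apply/idP/idP => [/subsetP rUv|vr].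
    by apply/negP => /rUv; rewrite setD11.
  by apply/subsetP => u ur; rewrite !inE (subsetP rU u ur) andbT; apply: contraNneq vr => <-.
have [cs0|cs0] := eqVneq (c s) 0.
  move: h; rewrite cs0 sub0r oppr_eq0 => /bdc_nz [u us /se /and3P [sU /eqP sm sc]].
  have sU' : s \subset U by apply: subset_trans sU; rewrite subsetUr.
  apply/and3P; split.
  - by rewrite sub.
  - by move: sm; rewrite cardsU1 us add1n => -[->].
  by apply: clq_sub sc; rewrite subsetUr.
case/and3P: (cs s cs0) => sU sm sc; apply/and3P; split => //.
by rewrite sub.
Qed.

Definition hered (U : {set 'I_n}) := forall U' : {set 'I_n}, U' \subset U -> (1 < #|U'|)%N ->
  exists v w, [/\ v \in U', w \in U', w != v &
     forall u, u \in U' -> u != v -> E u v -> E v w && ((u == w) || E u w)].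

Lemma acyclic m (hm : (1 < m)%N) N : forall U : {set 'I_n}, (#|U| <= N)%N -> hered U ->
  forall c, supp c (cl U m) -> (forall s, bdc c s = 0) ->
  exists e, supp e (cl U m.+1) /\ forall s, bdc e s = c s.
Proof.
elim: N => [|N IH] U UN hU c cs cz.
- have c0 s : c s = 0.
    apply/eqP; apply: contraT => /cs /and3P [sU /eqP sm _].
    move: (subset_leq_card sU); rewrite sm; move: UN; rewrite leqn0 => /eqP ->.
    by rewrite leqNgt (ltn_trans _ hm).
  exists (fun _ => 0); split; first by move=> s; rewrite eqxx.
  by move=> s; rewrite bdc0 c0.
case: (leqP #|U| 1) => U1.
- have c0 s : c s = 0.
    apply/eqP; apply: contraT => /cs /and3P [sU /eqP sm _].
    move: (subset_leq_card sU); rewrite sm => h.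
    by move: (leq_trans h U1); rewrite leqNgt hm.
  exists (fun _ => 0); split; first by move=> s; rewrite eqxx.
  by move=> s; rewrite bdc0 c0.
have [v [w [vU wU wv dom]]] := hU U (subxx U) U1.
have [e1 [se1 sc']] := reduce hm vU wU wv dom cs cz.
have c'z s : bdc (fun s => c s - bdc e1 s) s = 0 by rewrite bdcB cz bdc_bdc subrr.
have UvN : (#|U :\ v| <= N)%N.
  by move: UN; rewrite (cardsD1 v U) vU add1n ltnS.
have hUv : hered (U :\ v).
  by move=> U' sU'; apply: hU; apply: subset_trans sU' _; apply: subsetDl.
have [e2 [se2 be2]] := IH _ UvN hUv _ sc' c'z.
exists (fun s => e1 s + e2 s); split.
  move=> s h; have [e10|e10] := eqVneq (e1 s) 0.
    move: h; rewrite e10 add0r => /se2 /and3P [sU sm sc]; apply/and3P; split => //.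
    by apply: subset_trans sU _; apply: subsetDl.
  exact: se1.
by move=> s; rewrite bdcD be2 addrC subrK.
Qed.

End Graph.
Definition coef (tau sg : {set 'I_n}) : F := \sum_(v in tau | sg == tau :\ v) sgn tau v.

Lemma bdc_coef c sg : bdc c sg = \sum_tau c tau * coef tau sg.
Proof.
rewrite /coef; under eq_bigr do rewrite mulr_sumr.
under eq_bigr do rewrite big_mkcond /=.
rewrite exchange_big /= /bdc big_mkcond /=; apply: eq_bigr => v _.
rewrite -big_mkcond /=.
rewrite (eq_bigl (fun tau => (v \notin sg) && (tau == v |: sg))); last first.
  move=> tau /=; apply/andP/andP => [[vt /eqP ->]|[vs /eqP ->]].
    by rewrite setD11 setD1K.
  by rewrite setU11 setU1K.
case: ifP => vs /=; last by rewrite big_pred0.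
by rewrite (big_pred1 (v |: sg)).
Qed.

Lemma sum_enum (A : {set {set 'I_n}}) (u : 'rV[F]_#|A|) (g : {set 'I_n} -> F) :
  \sum_tau (\sum_(a < #|A|) (if enum_val a == tau then u 0 a else 0)) * g tau =
  \sum_(a < #|A|) u 0 a * g (enum_val a).
Proof.
under eq_bigr do rewrite mulr_suml.
rewrite exchange_big /=; apply: eq_bigr => a _.
rewrite (bigD1 (enum_val a)) //= eqxx big1 ?addr0 // => tau /negbTE.
by rewrite eq_sym => ->; rewrite mul0r.
Qed.

Lemma betti_vanish (R : realFieldType) (M : 'M[R]_n) (t : R) k :
  symmetric (Gedge M t) -> hered (Gedge M t) setT -> betti F M t k.+1 = 0%N.
Proof.
move=> Esym hU; rewrite /betti; apply/eqP; rewrite subn_eq0; apply: mxrankS.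
apply/row_subP => i; set u := row i _.
have uA : u *m bnd F M t k = 0 by rewrite -row_mul mulmx_ker row0.
clearbody u.
set E := Gedge M t.
pose c tau := \sum_(a < #|simplices M t k.+1|)
   (if enum_val a == tau then u 0 a else 0).
have Sk (j : nat) s : (s \in simplices M t j) = (#|s| == j.+1) && clq E s.
  by rewrite inE.
have cs : supp c (cl E setT k.+2).
  move=> tau; rewrite /c; case: (pickP (fun a : 'I_#|simplices M t k.+1| => enum_val a == tau)) => [a /eqP ta _|h].
    by have := enum_valP a; rewrite ta Sk /cl subsetT.
  by rewrite big1 ?eqxx // => a _; rewrite h.
have coef0 tau sg : tau \in simplices M t k.+1 -> sg \notin simplices M t k -> coef tau sg = 0.
  move=> tS sS; apply: big1 => v /andP [vt /eqP sgE]; move: sS; rewrite sgE Sk.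
  move: tS; rewrite Sk => /andP [/eqP tk tc].
  rewrite (cardsD1 v tau) vt in tk; move: tk; rewrite add1n => -[->].
  by rewrite eqxx (clq_sub (subD1set _ _) tc).
have cz sg : bdc c sg = 0.
  rewrite bdc_coef sum_enum.
  case sS: (sg \in simplices M t k).
    have hb := enum_rankK_in sS sS.
    rewrite -{1}hb.
    apply: etrans (_ : _ = (u *m bnd F M t k) 0 (enum_rank_in sS sg)) _; last by rewrite uA mxE.
    rewrite mxE; apply: eq_bigr => a _; rewrite /bnd !mxE //.
  by apply: big1 => a _; rewrite coef0 ?mulr0 ?sS // enum_valP.
have [e [se be]] := acyclic Esym (isT : (1 < k.+2)%N) (leqnn #|[set: 'I_n]|) hU cs cz.
apply/submxP; exists (\row_(a < #|simplices M t k.+2|) e (enum_val a)).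
apply/rowP => b; rewrite !mxE.
have -> : u 0 b = c (enum_val b).
  rewrite /c (bigD1 b) //= eqxx big1 ?addr0 // => a ab.
  by rewrite (inj_eq enum_val_inj) (negbTE ab).
rewrite -be bdc_coef.
rewrite (bigID (fun tau => tau \in simplices M t k.+2)) /= [X in _ + X]big1 ?addr0; last first.
  move=> tau tS; have [e0|/se /and3P [_ tk tc]] := eqVneq (e tau) 0; first by rewrite e0 mul0r.
  by move: tS; rewrite Sk tk tc.
rewrite big_enum_val /=; apply: eq_bigr => a _; rewrite !mxE //.
Qed.

End Chains.

Section Concrete.
Variables (R : realFieldType) (n : nat) (M : 'M[R]_n) (t : R).

Lemma ordmx_le i j i' j' : M i' j' <= M i j -> (ordmx M i' j' <= ordmx M i j)%N.
Proof.
move=> h; rewrite /ordmx ltnS; apply: subset_leq_card; apply/subsetP => p.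
by rewrite !inE => /andP [h1 h2]; rewrite h1 (lt_le_trans h2 h).
Qed.

Lemma Gedge_mono i j i' j' : i' != j' -> M i' j' <= M i j ->
  Gedge M t i j -> Gedge M t i' j'.
Proof.
rewrite /Gedge => ij h /andP [_ le]; rewrite ij /=; apply: le_trans le.
by rewrite ler_nat; exact: ordmx_le.
Qed.

Lemma Gedge_sym : (forall i j, M i j = M j i) -> symmetric (Gedge M t).
Proof.
move=> Ms i j; apply/idP/idP => h; have /andP [ij _] := h;
  (apply: (Gedge_mono _ _ h); [by rewrite eq_sym | by rewrite Ms]).
Qed.

End Concrete.

Lemma dom_pick n (E : rel 'I_n) (U' G : {set 'I_n}) w : w \in G -> G \subset U' -> (1 < #|G|)%N ->
 (forall v u, v \in G -> v != w -> u \in U' -> u != v -> E u v -> E v w && ((u == w) || E u w)) ->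
 exists v w, [/\ v \in U', w \in U', w != v &
   forall u, u \in U' -> u != v -> E u v -> E v w && ((u == w) || E u w)].
Proof.
move=> wG GU /card_gt1P [a [b [aG bG ab]]] h.
have [v [vG vw]] : exists v, v \in G /\ v != w.
  case: (a =P w) => [aw|/eqP aw]; last by exists a.
  by exists b; split => //; rewrite -aw eq_sym.
exists v, w; split; rewrite ?(subsetP GU) // 1?eq_sym //.
by move=> u uU uv Euv; apply: h.
Qed.

Lemma argmin_ex n (G : {set 'I_n}) a : a \in G -> exists2 w, w \in G & forall j, j \in G -> (w <= j)%N.
Proof.
move=> aG; case: (@arg_minnP _ a (mem G) val aG) => w wG wmin.
by exists w => // j jG; apply: wmin.
Qed.

Lemma argmax_ex n (G : {set 'I_n}) a : a \in G -> exists2 w, w \in G & forall j, j \in G -> (j <= w)%N.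
Proof.
move=> aG; case: (@arg_maxnP _ a (mem G) val aG) => w wG wmax.
by exists w => // j jG; apply: wmax.
Qed.

Section X.
Variables (R : realFieldType) (n l : nat) (x : 'I_n -> R) (t : R).
Hypothesis xm : forall i j : 'I_n, (i <= j)%N -> x i <= x j.
Hypothesis xn : forall i : 'I_n, (i < l)%N -> x i < 0.
Hypothesis xp : forall i : 'I_n, (l <= i)%N -> 0 <= x i.

Local Notation E := (Gedge (\matrix_(i, j) (- (x i * x j))) t).

Lemma Esym : symmetric E.
Proof. by apply: Gedge_sym => i j; rewrite !mxE mulrC. Qed.

Lemma Emono i j u v : u != v -> - (x u * x v) <= - (x i * x j) -> E i j -> E u v.
Proof. by move=> uv h; apply: Gedge_mono => //; rewrite !mxE. Qed.

Lemma hered_x : hered E setT.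
Proof.
move=> U' _ U2.
set N := [set u : 'I_n | (u < l)%N].
have cardU : #|U'| = (#|U' :&: N| + #|U' :\: N|)%N by rewrite cardsID.
case: (ltnP 1 #|U' :&: N|) => hN; [|case: (ltnP 1 #|U' :\: N|) => hP].
- have [a aG] : exists a, a \in U' :&: N.
    by case/card_gt1P: hN => a [b [aG _ _]]; exists a.
  case: (boolP [exists i : 'I_n, exists j : 'I_n, [&& (i < l)%N, (l <= j)%N & E i j]]) =>
    [/existsP [i0 /existsP [j0 /and3P [i0l lj0 Eij]]] | /existsPn noX].
  + have [w wG wmax] := argmax_ex aG.
    apply: (dom_pick wG (subsetIl _ _) hN) => v u vG vw uU uv Euv.
    move: (vG) (wG); rewrite !inE => /andP [_ vl] /andP [_ wl].
    have hx0 : 0 <= - (x i0 * x j0) by have := xn i0l; have := xp lj0; nra.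
    have Evw : E v w.
      apply: Emono vw _ Eij; have := xn vl; have := xn wl; nra.
    rewrite Evw /=; case: (u =P w) => [->|/eqP uw] //=.
    case ul: (u < l)%N.
      by apply: Emono uw _ Eij; have := xn ul; have := xn wl; nra.
    have lu : (l <= u)%N by rewrite leqNgt ul.
    apply: Emono uw _ Euv; have := xp lu; have := xm (wmax v vG); nra.
  + have noE (u v : 'I_n) : (u < l)%N -> (l <= v)%N -> ~~ E u v.
      move=> ul lv; apply/negP => Euv; move: (noX u); rewrite negb_exists => /forallP /(_ v).
      by rewrite ul lv Euv.
    have [w wG wmin] := argmin_ex aG.
    apply: (dom_pick wG (subsetIl _ _) hN) => v u vG vw uU uv Euv.
    move: (vG) (wG); rewrite !inE => /andP [_ vl] /andP [_ wl].
    have ul : (u < l)%N.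
      by apply/negPn/negP; rewrite -leqNgt => lu; move: Euv; rewrite Esym; apply/negP/noE.
    have uG : u \in U' :&: N by rewrite !inE uU ul.
    have xwu := xm (wmin u uG); have xwv := xm (wmin v vG).
    case: (u =P w) => [uw|/eqP uw].
      by rewrite /= andbT Esym -uw.
    rewrite /=; apply/andP; split.
      by apply: Emono vw _ Euv; have := xn vl; nra.
    by apply: Emono uw _ Euv; have := xn ul; nra.
- have [a aG] : exists a, a \in U' :\: N.
    by case/card_gt1P: hP => a [b [aG _ _]]; exists a.
  have inP (z : 'I_n) : z \in U' :\: N -> (l <= z)%N.
    by case/setDP => _; rewrite inE -leqNgt.
  case: (boolP [exists i : 'I_n, exists j : 'I_n, [&& (i < l)%N, (l <= j)%N & E i j]]) =>
    [/existsP [i0 /existsP [j0 /and3P [i0l lj0 Eij]]] | /existsPn noX].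
  + have [w wG wmin] := argmin_ex aG.
    apply: (dom_pick wG (subsetDl _ _) hP) => v u vG vw uU uv Euv.
    have lv := inP _ vG; have lw := inP _ wG.
    have hx0 : 0 <= - (x i0 * x j0) by have := xn i0l; have := xp lj0; nra.
    have Evw : E v w.
      apply: Emono vw _ Eij; have := xp lv; have := xp lw; nra.
    rewrite Evw /=; case: (u =P w) => [->|/eqP uw] //=.
    case ul: (u < l)%N; last first.
      have lu : (l <= u)%N by rewrite leqNgt ul.
      by apply: Emono uw _ Eij; have := xp lu; have := xp lw; nra.
    apply: Emono uw _ Euv; have := xn ul; have := xm (wmin v vG); nra.
  + have noE (u v : 'I_n) : (u < l)%N -> (l <= v)%N -> ~~ E u v.
      move=> ul lv; apply/negP => Euv; move: (noX u); rewrite negb_exists => /forallP /(_ v).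
      by rewrite ul lv Euv.
    have [w wG wmax] := argmax_ex aG.
    apply: (dom_pick wG (subsetDl _ _) hP) => v u vG vw uU uv Euv.
    have lv := inP _ vG; have lw := inP _ wG.
    have lu : (l <= u)%N.
      by rewrite leqNgt; apply/negP => ul; move: Euv; apply/negP/noE.
    have uG : u \in U' :\: N by rewrite !inE uU -leqNgt lu.
    have xwu := xm (wmax u uG); have xwv := xm (wmax v vG).
    case: (u =P w) => [uw|/eqP uw].
      by rewrite /= andbT Esym -uw.
    rewrite /=; apply/andP; split.
      by apply: Emono vw _ Euv; have := xp lv; nra.
    by apply: Emono uw _ Euv; have := xp lu; nra.
have h1 : #|U' :&: N| == 1%N.
  by move: U2; rewrite cardU; lia.
have h2 : #|U' :\: N| == 1%N.
  by move: U2; rewrite cardU; lia.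
case/cards1P: h1 => a ha; case/cards1P: h2 => b hb.
have aU : a \in U' :&: N by rewrite ha set11.
have bU : b \in U' :\: N by rewrite hb set11.
move: (aU) (bU); rewrite !inE => /andP [aU' al] /andP [bl bU'].
exists a, b; split => //.
  by apply: contraNneq bl => ->.
move=> u uU ua Eua.
have ub : u = b.
  case ul: (u < l)%N.
    have : u \in U' :&: N by rewrite !inE uU ul.
    by rewrite ha inE (negbTE ua).
  have : u \in U' :\: N by rewrite !inE uU ul.
  by rewrite hb inE => /eqP.
by rewrite ub eqxx orTb andbT Esym -ub.
Qed.

End X.

Theorem theorem3 (F : fieldType) (R : realFieldType) (n l : nat) (x : 'I_n -> R) :
  (2 <= n)%N -> (1 <= l)%N -> (l <= n - 1)%N ->
  (forall i j : 'I_n, (i <= j)%N -> x i <= x j) ->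
  (forall i : 'I_n, (i < l)%N -> x i < 0) ->
  (forall i : 'I_n, (l <= i)%N -> 0 <= x i) ->
  offdiag_distinct (\matrix_(i, j) (- (x i * x j))) ->
  forall (k : nat) (t : R), (0 < k)%N -> 0 <= t <= 1 ->
    betti F (\matrix_(i, j) (- (x i * x j))) t k = 0%N.
Proof.
move=> _ _ _ xm xn xp _ k t k0 _.
case: k k0 => [//|k] _.
apply: betti_vanish; first exact: Esym.
exact: (@hered_x R n l x t xm xn xp).
Qed.
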